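(* For every integer $a\geq 1$, $$\sum_{n\geq 1}\frac{H_{2n-1}}{(2n-1)^{2a}}=\frac{2a+1}{2}\lambda(2a+1)-\sum_{j=1}^{a-1}\zeta(2a+1-2j)\lambda(2j),$$ where an empty sum equals $0$.
   Context: $H_n=1+\frac12+\cdots+\frac1n$. For real $s>1$, $\lambda(s)=\sum_{n\geq 1}\frac{1}{(2n-1)^s}=(1-2^{-s})\zeta(s)$, and $\zeta$ is the Riemann zeta function. *)

(* Defs.v *)
From Stdlib Require Import Reals List.
From Coquelicot Require Import Coquelicot.
Open Scope R_scope.

Definition harmonic (n : nat) : R :=
  fold_right Rplus 0 (map (fun k => / INR k) (seq 1 n)).

Definition zeta (s : nat) : R := Series (fun n => / (INR (S n)) ^ s).

Definition lambda (s : nat) : R := Series (fun n => / (INR (2 * n + 1)) ^ s).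

Definition sum_1_to (m : nat) (f : nat -> R) : R :=
  fold_right Rplus 0 (map f (seq 1 m)).

(* Main.v *)
Require Import Defs.
From Stdlib Require Import Reals List.
From Coquelicot Require Import Coquelicot.
From Stdlib Require Import Lra Lia.
Open Scope R_scope.

Fixpoint sumN (f : nat -> R) (n : nat) : R :=
  match n with O => 0 | S m => sumN f m + f m end.

Lemma sumN_ext f g n : (forall k, (k < n)%nat -> f k = g k) -> sumN f n = sumN g n.
Proof. induction n; simpl; intros H; auto. rewrite IHn by (intros; apply H; lia). rewrite H by lia. auto. Qed.

Lemma sumN_shift f n : sumN f (S n) = f O + sumN (fun k => f (S k)) n.
Proof. induction n. simpl; ring. change (sumN f (S (S n))) with (sumN f (S n) + f (S n)). rewrite IHn. simpl. ring. Qed.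

Lemma sumN_plus f g n : sumN (fun k => f k + g k) n = sumN f n + sumN g n.
Proof. induction n; simpl; [ring| rewrite IHn; ring]. Qed.
Lemma sumN_minus f g n : sumN (fun k => f k - g k) n = sumN f n - sumN g n.
Proof. induction n; simpl; [ring| rewrite IHn; ring]. Qed.
Lemma sumN_scal c f n : sumN (fun k => c * f k) n = c * sumN f n.
Proof. induction n; simpl; [ring| rewrite IHn; ring]. Qed.
Lemma sumN_le f g n : (forall k, (k<n)%nat -> f k <= g k) -> sumN f n <= sumN g n.
Proof. induction n; simpl; intros H; [lra|]. assert (H1:=H n (Nat.lt_succ_diag_r n)). assert (sumN f n <= sumN g n) by (apply IHn; intros; apply H; lia). lra. Qed.
Lemma sumN_nonneg f n : (forall k, (k<n)%nat -> 0 <= f k) -> 0 <= sumN f n.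
Proof. intros H. replace 0 with (sumN (fun _ => 0) n). apply sumN_le; auto.
 induction n; simpl; auto. rewrite IHn; [ring|intros; apply H; lia]. Qed.
Lemma sumN_zero n : sumN (fun _ => 0) n = 0.
Proof. induction n; simpl; auto; rewrite IHn; ring. Qed.

Lemma sumN_add f n m : sumN f (n + m) = sumN f n + sumN (fun k => f (n + k)%nat) m.
Proof. induction m; simpl. rewrite Nat.add_0_r; ring. rewrite Nat.add_succ_r; simpl. rewrite IHm; ring. Qed.

Lemma sumN_rev f n : sumN f n = sumN (fun k => f (n - S k)%nat) n.
Proof. induction n. auto. rewrite (sumN_shift (fun k => f (S n - S k)%nat)).
 change (sumN f (S n)) with (sumN f n + f n). rewrite IHn.
 replace (S n - 1)%nat with n by lia. rewrite Rplus_comm. f_equal. Qed.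

Lemma sumN_antisym f n : (forall k, (k < n)%nat -> f (n - S k)%nat = - f k) -> sumN f n = 0.
Proof. intros H. assert (sumN f n = - sumN f n).
 { rewrite sumN_rev at 1. rewrite <- (Rmult_1_l (sumN f n)), Ropp_mult_distr_l, <- sumN_scal.
   apply sumN_ext; intros; rewrite H; auto; ring. } lra. Qed.

Lemma fold_sumN f s n : fold_right Rplus 0 (map f (seq s n)) = sumN (fun k => f (s + k)%nat) n.
Proof. revert s; induction n; intros s. auto. cbn [seq map fold_right]. rewrite IHn, sumN_shift.
 rewrite Nat.add_0_r. f_equal. apply sumN_ext; intros; f_equal; lia. Qed.

Lemma sum_f_sumN a n : sum_f_R0 a n = sumN a (S n).
Proof. induction n. simpl; ring. simpl sum_f_R0. rewrite IHn. simpl; ring. Qed.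

Lemma series_sumN a l : is_series a l <-> is_lim_seq (sumN a) l.
Proof. rewrite is_series_Reals, is_lim_seq_incr_1, is_lim_seq_Reals. unfold infinite_sum, Un_cv.
 split; intros H eps Heps; destruct (H eps Heps) as [N HN]; exists N; intros n Hn;
 specialize (HN n Hn); [rewrite <- sum_f_sumN | rewrite sum_f_sumN]; auto. Qed.

Lemma sumN_S f n : sumN f (S n) = sumN f n + f n.
Proof. reflexivity. Qed.

Lemma sumN_opp f n : sumN (fun k => - f k) n = - sumN f n.
Proof. induction n; simpl; [ring| rewrite IHn; ring]. Qed.

Lemma isR_plus a b la lb : is_series a la -> is_series b lb -> is_series (fun n => a n + b n) (la + lb).
Proof. rewrite !series_sumN; intros; eapply is_lim_seq_ext. intros; symmetry; apply sumN_plus. apply is_lim_seq_plus'; auto. Qed.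
Lemma isR_minus a b la lb : is_series a la -> is_series b lb -> is_series (fun n => a n - b n) (la - lb).
Proof. rewrite !series_sumN; intros; eapply is_lim_seq_ext. intros; symmetry; apply sumN_minus. apply is_lim_seq_minus'; auto. Qed.
Lemma isR_scal c a la : is_series a la -> is_series (fun n => c * a n) (c * la).
Proof. rewrite !series_sumN; intros; eapply is_lim_seq_ext. intros; symmetry; apply sumN_scal. apply (is_lim_seq_scal_l _ c la); auto. Qed.
Lemma isR_ext (a b : nat -> R) (l : R) : (forall n, a n = b n) -> is_series a l -> is_series b l.
Proof. intros; eapply is_series_ext; eauto. Qed.
Lemma isR_eq (a : nat -> R) (l l' : R) : l = l' -> is_series a l -> is_series a l'.
Proof. intros ->; auto. Qed.
Lemma isR_zero : @is_series R_AbsRing R_NormedModule (fun _ : nat => 0) 0.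
Proof. rewrite series_sumN. eapply is_lim_seq_ext. intros; symmetry; apply sumN_zero. apply is_lim_seq_const. Qed.

Lemma isR_sumN (f : nat -> nat -> R) l N : (forall j, (j < N)%nat -> is_series (f j) (l j)) ->
  is_series (fun k => sumN (fun j => f j k) N) (sumN l N).
Proof. induction N; intros H. simpl. apply isR_zero.
 simpl. apply isR_plus. apply IHN; intros; apply H; lia. apply H; lia. Qed.

Lemma isR_finsupp (u : nat -> R) N : is_series (fun k => if (k <? N)%nat then u k else 0) (sumN u N).
Proof. rewrite series_sumN. apply is_lim_seq_incr_n with (N := N).
 eapply is_lim_seq_ext. 2: apply is_lim_seq_const. intros n. simpl. rewrite Nat.add_comm, sumN_add.
 rewrite (sumN_ext (fun k => if (N + k <? N)%nat then u (N + k)%nat else 0) (fun _ => 0)). rewrite sumN_zero. rewrite (sumN_ext (fun k => if (k <? N)%nat then u k else 0) u). ring.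
 intros k Hk. apply Nat.ltb_lt in Hk. rewrite Hk; auto.
 intros k Hk. destruct (Nat.ltb_spec (N+k) N); [lia|auto]. Qed.

Lemma isR_spike (v : R) m : is_series (fun k => if Nat.eqb k m then v else 0) v.
Proof. apply (isR_eq _ (sumN (fun k => if Nat.eqb k m then v else 0) (S m))).
 simpl. rewrite Nat.eqb_refl. rewrite (sumN_ext _ (fun _ => 0)). rewrite sumN_zero. ring.
 intros k Hk. destruct (Nat.eqb_spec k m); auto; lia.
 apply isR_ext with (a := fun k => if (k <? S m)%nat then (if Nat.eqb k m then v else 0) else 0); [|apply isR_finsupp].
 intros k. destruct (Nat.ltb_spec k (S m)); auto. destruct (Nat.eqb_spec k m); auto; lia. Qed.

Lemma lim_sumN_shift (c : nat -> R) L : is_lim_seq c 0 -> is_lim_seq (fun N => sumN (fun k => c (N + k)%nat) L) 0.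
Proof. intros Hc. induction L. simpl. apply is_lim_seq_const.
 simpl. replace (Finite 0) with (Finite (0 + 0)) by (f_equal; ring). apply is_lim_seq_plus'; auto.
 apply is_lim_seq_incr_n with (N := L) in Hc. eapply is_lim_seq_ext; [|exact Hc]. intros; simpl; f_equal; lia. Qed.

Lemma isR_lag (c : nat -> R) L : is_lim_seq c 0 -> is_series (fun k => c k - c (k + L)%nat) (sumN c L).
Proof. intros Hc. rewrite series_sumN.
 assert (E : forall N, sumN (fun k => c k - c (k + L)%nat) N = sumN c L - sumN (fun k => c (N + k)%nat) L).
 { induction N. simpl. change (fun k : nat => c k) with c. lra. 
   simpl. rewrite IHN. 
   assert (H1 := sumN_shift (fun k => c (N + k)%nat) L). simpl in H1.
   rewrite Nat.add_0_r in H1. 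
   assert (H2 : sumN (fun k => c (N + S k)%nat) L = sumN (fun k => c (S (N + k))) L) by (apply sumN_ext; intros; f_equal; lia).
   rewrite H2 in H1. replace (L + N)%nat with (N + L)%nat in H1 by lia. lra. }
 eapply is_lim_seq_ext. intros; symmetry; apply E.
 replace (Finite (sumN c L)) with (Finite (sumN c L - 0)) by (f_equal; ring).
 apply is_lim_seq_minus'. apply is_lim_seq_const. apply lim_sumN_shift; auto. Qed.

Lemma lim_inv_S : is_lim_seq (fun n => / INR (S n)) 0.
Proof. replace (Finite 0) with (Rbar_inv p_infty) by auto. apply is_lim_seq_inv. 
 apply is_lim_seq_incr_1 with (u := INR). apply is_lim_seq_INR. discriminate. Qed.

Lemma sumN_le_Series a : (forall n, 0 <= a n) -> ex_series a -> forall n, sumN a n <= Series a.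
Proof. intros Hp He n. assert (H := Series_correct _ He). rewrite series_sumN in H.
 assert (Hl : Rbar_le (Finite (sumN a n)) (Finite (Series a))).
 { apply is_lim_seq_le with (u := fun _ => sumN a n) (v := fun m => sumN a (n + m)%nat).
   intros m. rewrite sumN_add. assert (0 <= sumN (fun k => a (n + k)%nat) m) by (apply sumN_nonneg; auto). rewrite <- (Rplus_0_r (sumN a n)) at 1; apply Rplus_le_compat_l; exact H0.
   apply is_lim_seq_const. apply is_lim_seq_incr_n with (u := sumN a) (N := n) in H.
   eapply is_lim_seq_ext; [|exact H]. intros; simpl; rewrite Nat.add_comm; reflexivity. }
 simpl in Hl. auto. Qed.

Lemma term_le_Series a : (forall n, 0 <= a n) -> ex_series a -> forall n, a n <= Series a.
Proof. intros Hp He n. eapply Rle_trans; [|apply (sumN_le_Series a Hp He (S n))]. simpl.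
 assert (0 <= sumN a n) by (apply sumN_nonneg; auto). lra. Qed.

Lemma bounded_series a M : (forall n, 0 <= a n) -> (forall n, sumN a n <= M) -> ex_series a /\ Series a <= M.
Proof. intros Hp HM.
 assert (Hinc : forall n, sumN a n <= sumN a (S n)) by (intros; simpl; specialize (Hp n); lra).
 destruct (ex_finite_lim_seq_incr _ M Hinc HM) as [l Hl].
 assert (Hs : is_series a l) by (apply series_sumN; auto).
 split. exists l; auto. rewrite (is_series_unique _ _ Hs).
 assert (H := is_lim_seq_le _ _ _ _ HM Hl (is_lim_seq_const M)). simpl in H; auto. Qed.


Lemma series_le_bound a l M : is_series a l -> (forall n, sumN a n <= M) -> l <= M.
Proof. rewrite series_sumN. intros H HM. assert (X := is_lim_seq_le _ _ _ _ HM H (is_lim_seq_const M)). simpl in X; auto. Qed.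

Lemma ex_series_le_R (a b : nat -> R) : (forall n, Rabs (a n) <= b n) -> ex_series b -> ex_series a.
Proof. intros H Hb; apply (@ex_series_le R_AbsRing R_CompleteNormedModule a b); auto. Qed.

Lemma Series_sumN (f : nat -> nat -> R) N : (forall j, (j < N)%nat -> ex_series (f j)) ->
  Series (fun k => sumN (fun j => f j k) N) = sumN (fun j => Series (f j)) N.
Proof. intros H. apply is_series_unique. apply isR_sumN. intros; apply Series_correct; auto. Qed.

Lemma tonelli (f : nat -> nat -> R) : (forall x y, 0 <= f x y) -> (forall x, ex_series (f x)) ->
  ex_series (fun x => Series (f x)) ->
  (forall y, ex_series (fun x => f x y)) /\
  is_series (fun y => Series (fun x => f x y)) (Series (fun x => Series (f x))).
Proof. intros Hp Hx HB.
 assert (Hy : forall y, ex_series (fun x => f x y)).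
 { intros y. apply ex_series_le_R with (b := fun x => Series (f x)); auto.
   intros x. rewrite Rabs_pos_eq by auto. apply term_le_Series; auto. }
 split; auto.
 set (G := fun y => Series (fun x => f x y)).
 assert (HG0 : forall y, 0 <= G y).
 { intros y. unfold G. eapply Rle_trans; [|apply (sumN_le_Series _ (fun x => Hp x y) (Hy y) 1)]. simpl. rewrite Rplus_0_l; auto. }
 assert (Hb : forall N, sumN G N <= Series (fun x => Series (f x))).
 { intros N. unfold G. rewrite <- (Series_sumN (fun y x => f x y)) by auto.
   apply Series_le; auto. intros x. split. apply sumN_nonneg; auto.
   apply sumN_le_Series; auto. }
 destruct (bounded_series G _ HG0 Hb) as [HGe HGle].
 assert (HB2 : Series (fun x => Series (f x)) <= Series G).
 { apply series_le_bound with (a := fun x => Series (f x)). apply Series_correct; auto.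
   intros M. rewrite <- (Series_sumN f) by auto.
   apply Series_le; auto. intros y. split. apply sumN_nonneg; auto.
   apply (sumN_le_Series (fun x => f x y)); auto. }
 replace (Series (fun x => Series (f x))) with (Series G) by lra.
 apply Series_correct; auto. Qed.

Lemma fubini (f : nat -> nat -> R) : (forall x, ex_series (fun y => Rabs (f x y))) ->
  ex_series (fun x => Series (fun y => Rabs (f x y))) ->
  is_series (fun y => Series (fun x => f x y)) (Series (fun x => Series (f x))).
Proof. intros H1 H2.
 set (P := fun x y => (Rabs (f x y) + f x y) / 2).
 set (Q := fun x y => (Rabs (f x y) - f x y) / 2).
 assert (HP : forall x y, 0 <= P x y /\ P x y <= Rabs (f x y)) by (intros; unfold P; split_Rabs; lra).
 assert (HQ : forall x y, 0 <= Q x y /\ Q x y <= Rabs (f x y)) by (intros; unfold Q; split_Rabs; lra).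
 assert (HPe : forall x, ex_series (P x)).
 { intros x; apply ex_series_le_R with (b := fun y => Rabs (f x y)); auto. intros y; rewrite Rabs_pos_eq; apply HP. }
 assert (HQe : forall x, ex_series (Q x)).
 { intros x; apply ex_series_le_R with (b := fun y => Rabs (f x y)); auto. intros y; rewrite Rabs_pos_eq; apply HQ. }
 assert (HSP : ex_series (fun x => Series (P x))).
 { apply ex_series_le_R with (b := fun x => Series (fun y => Rabs (f x y))); auto. intros x.
   rewrite Rabs_pos_eq. apply Series_le; auto. 
   eapply Rle_trans; [|apply (sumN_le_Series _ (fun y => proj1 (HP x y)) (HPe x) 1)]; simpl; destruct (HP x O); lra. }
 assert (HSQ : ex_series (fun x => Series (Q x))).
 { apply ex_series_le_R with (b := fun x => Series (fun y => Rabs (f x y))); auto. intros x.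
   rewrite Rabs_pos_eq. apply Series_le; auto. 
   eapply Rle_trans; [|apply (sumN_le_Series _ (fun y => proj1 (HQ x y)) (HQe x) 1)]; simpl; destruct (HQ x O); lra. }
 destruct (tonelli P (fun x y => proj1 (HP x y)) HPe HSP) as [HPy HPs].
 destruct (tonelli Q (fun x y => proj1 (HQ x y)) HQe HSQ) as [HQy HQs].
 assert (Ef : forall x y, f x y = P x y - Q x y) by (intros; unfold P, Q; field).
 assert (E1 : forall y, Series (fun x => f x y) = Series (fun x => P x y) - Series (fun x => Q x y)).
 { intros y. rewrite <- Series_minus by auto. apply Series_ext; intros; auto. }
 assert (E2 : forall x, Series (f x) = Series (P x) - Series (Q x)).
 { intros x. rewrite <- Series_minus by auto. apply Series_ext; intros; auto. }
 rewrite (Series_ext _ _ E2), Series_minus by auto.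
 eapply isR_ext; [|apply isR_minus; [exact HPs|exact HQs]]. intros y; simpl; rewrite E1; auto. Qed.

Lemma INR_S_pos k : 0 < INR (S k).
Proof. apply lt_0_INR; lia. Qed.

Lemma ex_inv_sq : ex_series (fun k => / INR (S k) ^ 2).
Proof. apply ex_series_le_R with (b := fun k => 2 * / INR (S k) - 2 * / INR (S (k + 1))).
 2: { eexists. apply (isR_lag (fun k => 2 * / INR (S k)) 1). 
      replace (Finite 0) with (Finite (2 * 0)) by (f_equal; ring). apply is_lim_seq_scal_l with (a:=2) (lu := Finite 0). apply lim_inv_S. }
 intros k. rewrite Rabs_pos_eq by (apply Rlt_le, Rinv_0_lt_compat, pow_lt, INR_S_pos).
 rewrite !S_INR, plus_INR. simpl. assert (0 <= INR k) by apply pos_INR.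
 apply Rmult_le_reg_l with ((INR k + 1) * (INR k + 1) * (INR k + 1 + 1)). nra.
 field_simplify; [|nra|nra]. nra. Qed.

Lemma ex_zeta_terms s : (2 <= s)%nat -> ex_series (fun k => / INR (S k) ^ s).
Proof. intros Hs. apply ex_series_le_R with (b := fun k => / INR (S k) ^ 2); [|apply ex_inv_sq].
 intros k. assert (H1 : 1 <= INR (S k)) by (rewrite S_INR; assert (0 <= INR k) by apply pos_INR; lra).
 rewrite Rabs_pos_eq by (apply Rlt_le, Rinv_0_lt_compat, pow_lt; lra).
 apply Rinv_le_contravar. apply pow_lt; lra. apply Rle_pow; auto. Qed.

Lemma ex_lambda_terms s : (2 <= s)%nat -> ex_series (fun i => / INR (2 * i + 1) ^ s).
Proof. intros Hs. apply ex_series_le_R with (b := fun k => / INR (S k) ^ s); [|apply ex_zeta_terms; auto].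
 intros k. rewrite Rabs_pos_eq by (apply Rlt_le, Rinv_0_lt_compat, pow_lt, lt_0_INR; lia).
 apply Rinv_le_contravar. apply pow_lt, INR_S_pos. apply pow_incr. split. apply Rlt_le, INR_S_pos. apply le_INR; lia. Qed.

Lemma is_zeta s : (2 <= s)%nat -> is_series (fun k => / INR (S k) ^ s) (zeta s).
Proof. intros; apply Series_correct, ex_zeta_terms; auto. Qed.
Lemma is_lambda s : (2 <= s)%nat -> is_series (fun i => / INR (2 * i + 1) ^ s) (lambda s).
Proof. intros; apply Series_correct, ex_lambda_terms; auto. Qed.

Lemma sumN_even (u : nat -> R) N : (forall i, u (2 * i + 1)%nat = 0) ->
  sumN u (2 * N) = sumN (fun i => u (2 * i)%nat) N /\ sumN u (2 * N + 1) = sumN (fun i => u (2 * i)%nat) (S N).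
Proof. intros H. assert (SS : forall f n, sumN f (S n) = sumN f n + f n) by reflexivity.
 induction N. simpl. split; auto. 
 destruct IHN as [H1 H2]. replace (2 * S N)%nat with (S (2 * N + 1)) by lia. split.
 rewrite SS, H2, H. ring. replace (S (2 * N + 1) + 1)%nat with (S (S (2 * N + 1))) by lia.
 rewrite SS, SS, H2, H, (SS _ (S N)). replace (S (2 * N + 1)) with (2 * S N)%nat by lia. ring. Qed.

Lemma isR_even (u : nat -> R) l : (forall i, u (2 * i + 1)%nat = 0) -> is_series (fun i => u (2 * i)%nat) l -> is_series u l.
Proof. intros H Hs. rewrite series_sumN, is_lim_seq_Reals in *. intros eps Heps.
 destruct (Hs eps Heps) as [K HK]. exists (2 * K + 1)%nat. intros n Hn.
 destruct (Nat.Even_or_Odd n) as [[N ->]|[N ->]].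
 - rewrite (proj1 (sumN_even u N H)). apply HK; lia.
 - rewrite (proj2 (sumN_even u N H)). apply HK; lia. Qed.

Definition Hn (p : nat) : R := sumN (fun k => / INR (S k)) p.

Lemma harmonic_Hn p : harmonic p = Hn p.
Proof. unfold harmonic, Hn. rewrite fold_sumN. apply sumN_ext; intros; f_equal. Qed.

Lemma Hn_nonneg p : 0 <= Hn p.
Proof. apply sumN_nonneg; intros; apply Rlt_le, Rinv_0_lt_compat, INR_S_pos. Qed.

Lemma HS_ineq (H P : R) : 0 <= H -> 1 <= P ->
  H / P ^ 2 <= 3 / 2 * (H / P - (H + / (P + 1) + / (P + 2)) / (P + 2)) + 3 / (P + 1) ^ 2.
Proof. intros HH HP.
 assert (E : 3 / 2 * (H / P - (H + / (P + 1) + / (P + 2)) / (P + 2)) = 3 * H / (P * (P + 2)) - 3/2 * (/ (P + 1) + / (P + 2)) / (P + 2)) by (field; lra).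
 rewrite E.
 assert (A1 : H / P ^ 2 <= 3 * H / (P * (P + 2))).
 { assert (3 * H / (P * (P + 2)) - H / P ^ 2 = H * (2 * P - 2) / (P ^ 2 * (P + 2))) by (field; lra).
   assert (0 <= H * (2 * P - 2) / (P ^ 2 * (P + 2))). { apply Rmult_le_pos. apply Rmult_le_pos; lra. apply Rlt_le, Rinv_0_lt_compat. apply Rmult_lt_0_compat; nra. }
   lra. }
 assert (A2 : 3/2 * (/ (P + 1) + / (P + 2)) / (P + 2) <= 3 / (P + 1) ^ 2).
 { assert (/ (P + 2) <= / (P + 1)) by (apply Rinv_le_contravar; lra).
   assert (0 < / (P+2)) by (apply Rinv_0_lt_compat; lra).
   unfold Rdiv. replace (3 * / (P + 1) ^ 2) with (3/2 * (/ (P + 1) + / (P + 1)) * / (P + 1)) by (field; lra).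
   apply Rmult_le_compat. apply Rmult_le_pos; lra. lra. lra. lra. }
 lra. Qed.

Lemma ex_HS : ex_series (fun i => Hn (2 * i + 1) / INR (2 * i + 1) ^ 2).
Proof.
 set (v := fun i => Hn (2 * i + 1) / INR (2 * i + 1)).
 set (b := fun i => 3 / INR (S (2 * i + 1)) ^ 2).
 assert (Hb : ex_series b).
 { apply ex_series_le_R with (b := fun k => 3 * / INR (S k) ^ 2).
   2: { apply (ex_series_scal_l 3 (fun k => / INR (S k) ^ 2)), ex_inv_sq. }
   intros k. unfold b. rewrite Rabs_pos_eq. unfold Rdiv. apply Rmult_le_compat_l. lra.
   apply Rinv_le_contravar. apply pow_lt, INR_S_pos. apply pow_incr. split. apply Rlt_le, INR_S_pos. apply le_INR; lia.
   apply Rmult_le_pos. lra. apply Rlt_le, Rinv_0_lt_compat, pow_lt, INR_S_pos. }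
 assert (Hv0 : forall i, 0 <= v i).
 { intros i; unfold v. apply Rmult_le_pos. apply Hn_nonneg. apply Rlt_le, Rinv_0_lt_compat, lt_0_INR; lia. }
 assert (Hstep : forall i, Hn (2 * i + 1) / INR (2 * i + 1) ^ 2 <= 3 / 2 * (v i - v (S i)) + b i).
 { intros i. unfold v, b. 
   assert (E1 : Hn (2 * S i + 1) = Hn (2 * i + 1) + / (INR (2 * i + 1) + 1) + / (INR (2 * i + 1) + 2)).
   { replace (2 * S i + 1)%nat with (S (S (2 * i + 1))) by lia. unfold Hn. 
     change (sumN (fun k => / INR (S k)) (S (S (2 * i + 1)))) with (sumN (fun k => / INR (S k)) (2 * i + 1) + / INR (S (2 * i + 1)) + / INR (S (S (2 * i + 1)))).
     rewrite !S_INR. replace (INR (2 * i + 1) + 1 + 1) with (INR (2 * i + 1) + 2) by ring. reflexivity. }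
   assert (E2 : INR (2 * S i + 1) = INR (2 * i + 1) + 2) by (replace (2 * S i + 1)%nat with (S (S (2*i+1))) by lia; rewrite !S_INR; ring).
   assert (E3 : INR (S (2 * i + 1)) = INR (2 * i + 1) + 1) by (rewrite S_INR; auto).
   rewrite E1, E2, E3. apply HS_ineq. apply Hn_nonneg. change 1 with (INR 1); apply le_INR; lia. }
 assert (Hb0 : forall k, 0 <= b k) by (intros k; unfold b; apply Rmult_le_pos; [lra|apply Rlt_le, Rinv_0_lt_compat, pow_lt, INR_S_pos]).
 clearbody v b.
 destruct (bounded_series (fun i => Hn (2 * i + 1) / INR (2 * i + 1) ^ 2) (3/2 * v O + Series b)) as [He _].
 - intros i. apply Rmult_le_pos. apply Hn_nonneg. apply Rlt_le, Rinv_0_lt_compat, pow_lt, lt_0_INR; lia.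
 - intros N. assert (forall N, sumN (fun i => Hn (2 * i + 1) / INR (2 * i + 1) ^ 2) N <= 3/2 * (v O - v N) + sumN b N).
   { induction N0. simpl. lra. rewrite !sumN_S. specialize (Hstep N0). lra. }
   assert (sumN b N <= Series b).
   { apply sumN_le_Series; auto. }
   specialize (H N). specialize (Hv0 N). lra.
 - exact He. Qed.

Lemma lim_squeeze (w : nat -> R) : (forall n, 0 <= w n <= / INR (S n)) -> is_lim_seq w 0.
Proof. intros H. apply is_lim_seq_le_le with (u := fun _ => 0) (w := fun n => / INR (S n)); auto.
 apply is_lim_seq_const. apply lim_inv_S. Qed.

Lemma inv_le_S (x : R) n : INR (S n) <= x -> 0 <= / x <= / INR (S n).
Proof. intros H. assert (0 < INR (S n)) by apply INR_S_pos. split. apply Rlt_le, Rinv_0_lt_compat; lra.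
 apply Rinv_le_contravar; lra. Qed.

Definition tt (p k : nat) : R := if Nat.eqb k (p - 1) then 0 else / (INR (S k) * (INR p ^ 2 - INR (S k) ^ 2)).

Lemma D2 q : is_series (tt (S q)) ((Hn (S q) - 5 / (4 * INR (S q))) / INR (S q) ^ 2).
Proof.
 set (p := S q). set (P := INR p).
 assert (HP : 0 < P) by apply INR_S_pos.
 set (c := fun k => / INR (S k)).
 set (w := fun k => if Nat.eqb k q then 0 else / (INR (S k) - P)).
 assert (Hcw : forall k, w (k + p)%nat = c k).
 { intros k. unfold w, c. destruct (Nat.eqb_spec (k + p) q). unfold p in *; lia.
   f_equal. unfold P, p. rewrite !S_INR, plus_INR, !S_INR. ring. }
 assert (Hw0 : is_lim_seq w 0).
 { apply is_lim_seq_incr_n with (N := p). eapply is_lim_seq_ext; [|apply lim_inv_S]. intros; rewrite Hcw; auto. }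
 assert (S1 := isR_lag c p lim_inv_S).
 assert (S2 := isR_lag w p Hw0).
 assert (Ew : sumN w p = - Hn q).
 { unfold p. rewrite sumN_S. unfold w at 2. rewrite Nat.eqb_refl, Rplus_0_r.
   rewrite sumN_rev. unfold Hn. rewrite <- sumN_opp.
   apply sumN_ext. intros k Hk. unfold w. destruct (Nat.eqb_spec (q - S k) q). lia.
   unfold P, p. rewrite S_INR, minus_INR by lia. rewrite !S_INR. field. 
   assert (0 <= INR k) by apply pos_INR. lra. }
 set (s := fun k => if Nat.eqb k q then 3 / (4 * P ^ 3) else 0).
 assert (Et : forall k, tt p k = / P ^ 2 * (1/2 * (c k - c (k + p)%nat) - 1/2 * (w k - w (k + p)%nat)) - s k).
 { intros k. rewrite Hcw. unfold tt, s, w, c. replace (p - 1)%nat with q by (unfold p; lia).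
   destruct (Nat.eqb_spec k q).
   - subst k. replace (INR (S (q + p))) with (2 * P) by (unfold P, p; rewrite !S_INR, plus_INR, !S_INR; ring).
     unfold P, p in *. field. lra.
   - assert (Hy : INR (S k) <> P). { unfold P, p. intros E. apply INR_eq in E. lia. }
     assert (0 < INR (S k)) by apply INR_S_pos.
     replace (INR (S (k + p))) with (INR (S k) + P) by (unfold P, p; rewrite !S_INR, plus_INR, ?S_INR; ring).
     assert (P ^ 2 - INR (S k) ^ 2 <> 0).
     { replace (P ^ 2 - INR (S k) ^ 2) with ((P - INR (S k)) * (P + INR (S k))) by ring.
       apply Rmult_integral_contrapositive; split; lra. }
     unfold P, p in *. field. repeat split; lra. }
 eapply isR_ext. intros k; symmetry; apply Et.
 eapply isR_eq; [|apply isR_minus; [apply isR_scal, isR_minus; [apply isR_scal, S1 | apply isR_scal, S2]| apply isR_spike]].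
 rewrite Ew. assert (Ec : sumN c p = Hn q + / P) by reflexivity. rewrite Ec.
 assert (Eh : Hn p = Hn q + / P) by reflexivity. rewrite Eh. unfold P, p in *. field. lra. Qed.

Definition uu (k i : nat) : R := if Nat.eqb (2 * i) k then 0 else / (INR (2 * i + 1) ^ 2 - INR (S k) ^ 2).

Lemma INR_2i1 i : INR (2 * i + 1) = 2 * INR i + 1.
Proof. rewrite plus_INR, mult_INR. simpl. ring. Qed.

Lemma D3even m : is_series (uu (2 * m)) (/ (4 * INR (2 * m + 1) ^ 2)).
Proof.
 set (b := INR m). assert (Hb : 0 <= b) by apply pos_INR.
 set (W := fun i => if Nat.eqb i m then 0 else / (2 * (INR i - b))).
 assert (Eu : forall i, uu (2 * m) i = / (2 * (2 * b + 1)) * (W i - W (i + (2 * m + 1))%nat) + (if Nat.eqb i m then / (4 * (2 * b + 1) ^ 2) else 0)).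
 { intros i. unfold uu, W. 
   replace (INR (S (2 * m))) with (2 * b + 1) by (rewrite S_INR, mult_INR; unfold b; simpl; ring).
   destruct (Nat.eqb_spec (i + (2 * m + 1)) m). lia.
   rewrite (plus_INR i (2 * m + 1)), !INR_2i1. fold b.
   destruct (Nat.eqb_spec i m).
   - subst i. rewrite Nat.eqb_refl. fold b. field. lra.
   - replace (Nat.eqb (2 * i) (2 * m)) with false by (symmetry; apply Nat.eqb_neq; lia).
     set (a := INR i). assert (0 <= a) by apply pos_INR.
     assert (a - b <> 0). { intros E. apply n0. apply INR_eq. unfold a, b in E. lra. }
     assert ((2 * a + 1) ^ 2 - (2 * b + 1) ^ 2 <> 0).
     { replace ((2 * a + 1) ^ 2 - (2 * b + 1) ^ 2) with (4 * (a - b) * (a + b + 1)) by ring.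
       apply Rmult_integral_contrapositive; split. apply Rmult_integral_contrapositive; split; lra. lra. }
     field. repeat split; lra. }
 assert (HW : sumN W (2 * m + 1) = 0).
 { apply sumN_antisym. intros j Hj. unfold W. 
   destruct (Nat.eqb_spec j m).
   - subst j. replace (2 * m + 1 - S m)%nat with m by lia. rewrite Nat.eqb_refl. ring.
   - destruct (Nat.eqb_spec (2 * m + 1 - S j) m). lia.
     replace (2 * m + 1 - S j)%nat with (2 * m - j)%nat by lia.
     rewrite minus_INR by lia. rewrite mult_INR. fold b. simpl INR.
     assert (INR j - b <> 0). { intros E. apply n. apply INR_eq. unfold b in E. lra. }
     field. lra. }
 assert (HW0 : is_lim_seq W 0).
 { apply is_lim_seq_incr_n with (N := S m). apply lim_squeeze. intros n. unfold W.
   destruct (Nat.eqb_spec (n + S m) m). lia. apply inv_le_S.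
   rewrite plus_INR, !S_INR. fold b. assert (0 <= INR n) by apply pos_INR. lra. }
 eapply isR_ext. intros i; symmetry; apply Eu.
 eapply isR_eq; [|apply isR_plus; [apply isR_scal, (isR_lag W (2 * m + 1) HW0)|apply isR_spike]].
 rewrite HW, INR_2i1. fold b. ring. Qed.

Lemma neq_odd_even (i m : nat) : 2 * INR i - 2 * INR m - 1 <> 0.
Proof. intros E. assert (INR (2 * i) = INR (2 * m + 1)) by (rewrite INR_2i1, mult_INR; simpl; lra).
 apply INR_eq in H. lia. Qed.

Lemma D3odd m : is_series (uu (2 * m + 1)) 0.
Proof.
 set (b := INR m). assert (Hb : 0 <= b) by apply pos_INR.
 set (W := fun i => / (2 * INR i - 2 * b - 1)).
 assert (Eu : forall i, uu (2 * m + 1) i = / (2 * (2 * b + 2)) * (W i - W (i + (2 * m + 2))%nat)).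
 { intros i. unfold uu, W.
   replace (Nat.eqb (2 * i) (2 * m + 1)) with false by (symmetry; apply Nat.eqb_neq; lia).
   replace (INR (S (2 * m + 1))) with (2 * b + 2) by (rewrite S_INR, INR_2i1; unfold b; ring).
   rewrite (plus_INR i (2 * m + 2)), INR_2i1. replace (INR (2 * m + 2)) with (2 * b + 2) by (rewrite plus_INR, mult_INR; unfold b; simpl; ring). set (a := INR i). assert (0 <= a) by apply pos_INR.
   assert (2 * a - 2 * b - 1 <> 0) by apply neq_odd_even.
   assert ((2 * a + 1) ^ 2 - (2 * b + 2) ^ 2 <> 0).
   { replace ((2 * a + 1) ^ 2 - (2 * b + 2) ^ 2) with ((2 * a - 2 * b - 1) * (2 * a + 2 * b + 3)) by ring.
     apply Rmult_integral_contrapositive; split; lra. }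
   field. repeat split; lra. }
 assert (HW : sumN W (2 * m + 2) = 0).
 { apply sumN_antisym. intros j Hj. unfold W.
   replace (2 * m + 2 - S j)%nat with (2 * m + 1 - j)%nat by lia.
   rewrite minus_INR by lia. rewrite INR_2i1. fold b.
   assert (2 * INR j - 2 * b - 1 <> 0) by apply neq_odd_even.
   field. split; lra. }
 assert (HW0 : is_lim_seq W 0).
 { apply is_lim_seq_incr_n with (N := S m). apply lim_squeeze. intros n. unfold W.
   apply inv_le_S. rewrite plus_INR, !S_INR. fold b. assert (0 <= INR n) by apply pos_INR. lra. }
 eapply isR_ext. intros i; symmetry; apply Eu.
 eapply isR_eq; [|apply isR_scal, (isR_lag W (2 * m + 2) HW0)].
 rewrite HW. ring. Qed.

Definition GF (m : nat) (x y : R) : R := sumN (fun t => / x ^ (2 * t + 2) * / y ^ (2 * m + 1 - 2 * t)) m.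

Lemma GF_S m x y : GF (S m) x y = / x ^ 2 * / y ^ (2 * m + 3) + / x ^ 2 * GF m x y.
Proof. unfold GF. rewrite sumN_shift. f_equal.
 - replace (2 * 0 + 2)%nat with 2%nat by lia. replace (2 * S m + 1 - 2 * 0)%nat with (2 * m + 3)%nat by lia. auto.
 - rewrite <- sumN_scal. apply sumN_ext. intros t Ht.
   replace (2 * S t + 2)%nat with ((2 * t + 2) + 2)%nat by lia.
   replace (2 * S m + 1 - 2 * S t)%nat with (2 * m + 1 - 2 * t)%nat by lia.
   rewrite pow_add, Rinv_mult. ring. Qed.

Lemma GF_off m x y : 0 < x -> 0 < y -> x <> y -> GF m x y = (/ y ^ (2 * m + 1) - / (y * x ^ (2 * m))) / (x ^ 2 - y ^ 2).
Proof. intros Hx Hy Hxy.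
 assert (Hd : x ^ 2 - y ^ 2 <> 0).
 { replace (x ^ 2 - y ^ 2) with ((x - y) * (x + y)) by ring. apply Rmult_integral_contrapositive; split; lra. }
 induction m.
 - unfold GF. simpl sumN. replace (/ y ^ (2 * 0 + 1) - / (y * x ^ (2 * 0))) with 0 by (simpl; field; lra). unfold Rdiv; ring.
 - rewrite GF_S, IHm. 
   replace (2 * m + 3)%nat with ((2 * m + 1) + 2)%nat by lia.
   replace (2 * S m + 1)%nat with ((2 * m + 1) + 2)%nat by lia.
   replace (2 * S m)%nat with ((2 * m) + 2)%nat by lia. rewrite !pow_add.
   assert (y ^ (2 * m + 1) <> 0) by (apply pow_nonzero; lra).
   assert (x ^ (2 * m) <> 0) by (apply pow_nonzero; lra).
   field. repeat split; try lra; auto; apply pow_nonzero; lra. Qed.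

Lemma GF_diag m x : 0 < x -> GF m x x = INR m / x ^ (2 * m + 3).
Proof. intros Hx. induction m.
 - unfold GF. simpl sumN. simpl INR. unfold Rdiv; ring.
 - rewrite GF_S, IHm. rewrite S_INR.
   replace (2 * S m + 3)%nat with ((2 * m + 3) + 2)%nat by lia. rewrite !pow_add.
   assert (x ^ (2 * m) <> 0) by (apply pow_nonzero; lra).
   field. split; auto; lra. Qed.

Definition X (i : nat) : R := INR (2 * i + 1).
Definition Y (k : nat) : R := INR (S k).

Lemma X_pos i : 0 < X i.
Proof. unfold X. apply lt_0_INR; lia. Qed.
Lemma X_ge1 i : 1 <= X i.
Proof. unfold X. change 1 with (INR 1). apply le_INR; lia. Qed.
Lemma Y_pos k : 0 < Y k.
Proof. apply INR_S_pos. Qed.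
Lemma Y_ge1 k : 1 <= Y k.
Proof. unfold Y. change 1 with (INR 1). apply le_INR; lia. Qed.
Lemma X_Y i : Y (2 * i) = X i.
Proof. unfold X, Y. f_equal. lia. Qed.

Definition FF m i k := GF m (X i) (Y k).
Definition DD m i k := if Nat.eqb k (2 * i) then INR m / X i ^ (2 * m + 3) else 0.
Definition g1 m i k := / Y k ^ (2 * m + 1) * uu k i.
Definition g2 m i k := / X i ^ (2 * m) * tt (S (2 * i)) k.

Lemma FF_decomp m i k : FF m i k = DD m i k + g1 m i k - g2 m i k.
Proof. unfold FF, DD, g1, g2, uu, tt.
 replace (S (2 * i) - 1)%nat with (2 * i)%nat by lia.
 replace (INR (S (2 * i))) with (X i) by (unfold X; f_equal; lia).
 fold (X i). change (INR (S k)) with (Y k).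
 destruct (Nat.eqb_spec k (2 * i)).
 - subst k. rewrite Nat.eqb_refl, X_Y. rewrite GF_diag by apply X_pos. ring.
 - replace (Nat.eqb (2 * i) k) with false by (symmetry; apply Nat.eqb_neq; lia).
   assert (Hne : X i <> Y k). { unfold X, Y. intros E. apply INR_eq in E. lia. }
   assert (Hx := X_pos i). assert (Hy := Y_pos k).
   rewrite GF_off by auto.
   assert (Hd : X i ^ 2 - Y k ^ 2 <> 0).
   { replace (X i ^ 2 - Y k ^ 2) with ((X i - Y k) * (X i + Y k)) by ring. apply Rmult_integral_contrapositive; split; lra. }
   assert (Y k ^ (2 * m + 1) <> 0) by (apply pow_nonzero; lra).
   assert (X i ^ (2 * m) <> 0) by (apply pow_nonzero; lra).
   field. repeat split; auto; lra. Qed.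

Lemma XS i : INR (S (2 * i)) = X i.
Proof. unfold X. f_equal. lia. Qed.

Lemma tt_eq i k : tt (S (2 * i)) k = if Nat.eqb k (2 * i) then 0 else / (Y k * (X i ^ 2 - Y k ^ 2)).
Proof. unfold tt. replace (S (2 * i) - 1)%nat with (2 * i)%nat by lia. rewrite XS. reflexivity. Qed.

Lemma sign_lt i k : (k < 2 * i)%nat -> 0 < X i ^ 2 - Y k ^ 2.
Proof. intros H. assert (Y k < X i). { rewrite <- XS. apply lt_INR. lia. }
 assert (Hy := Y_pos k). nra. Qed.
Lemma sign_gt i k : (2 * i < k)%nat -> X i ^ 2 - Y k ^ 2 < 0.
Proof. intros H. assert (X i < Y k). { rewrite <- XS. apply lt_INR. lia. }
 assert (Hx := X_pos i). nra. Qed.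

Lemma tt_abs i k : Rabs (tt (S (2 * i)) k) = - tt (S (2 * i)) k + 2 * (if (k <? 2 * i)%nat then tt (S (2 * i)) k else 0).
Proof. rewrite tt_eq. assert (Hy := Y_pos k).
 destruct (Nat.eqb_spec k (2 * i)).
 - subst k. replace ((2 * i) <? 2 * i)%nat with false by (symmetry; apply Nat.ltb_ge; lia). rewrite Rabs_R0. ring.
 - destruct (Nat.ltb_spec k (2 * i)).
   + assert (H1 := sign_lt i k H). rewrite Rabs_pos_eq. ring. apply Rlt_le, Rinv_0_lt_compat, Rmult_lt_0_compat; lra.
   + assert (H1 := sign_gt i k ltac:(lia)). rewrite Rabs_left. ring. apply Rinv_lt_0_compat.
     assert (0 < Y k * - (X i ^ 2 - Y k ^ 2)) by (apply Rmult_lt_0_compat; lra). lra. Qed.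

Lemma g1_abs m i k : Rabs (g1 m i k) <= Rabs (tt (S (2 * i)) k).
Proof. unfold g1, uu. rewrite tt_eq. change (INR (2 * i + 1)) with (X i). change (INR (S k)) with (Y k).
 destruct (Nat.eqb_spec k (2 * i)).
 - subst k. rewrite Nat.eqb_refl, Rmult_0_r. lra.
 - replace (Nat.eqb (2 * i) k) with false by (symmetry; apply Nat.eqb_neq; lia).
   rewrite Rinv_mult, !Rabs_mult. apply Rmult_le_compat_r. apply Rabs_pos.
   assert (Hy := Y_ge1 k). rewrite !Rabs_pos_eq.
   apply Rinv_le_contravar. lra. replace (2 * m + 1)%nat with (S (2 * m)) by lia. change (Y k ^ S (2 * m)) with (Y k * Y k ^ (2 * m)).
   assert (1 <= Y k ^ (2 * m)) by (apply pow_R1_Rle; lra). nra.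
   apply Rlt_le, Rinv_0_lt_compat; lra. apply Rlt_le, Rinv_0_lt_compat, pow_lt; lra. Qed.

Lemma ineq_term (y P : R) : 0 < y -> y < P -> / (y * (P ^ 2 - y ^ 2)) <= / P ^ 2 * (/ y + / (P - y)).
Proof. intros H1 H2. replace (/ P ^ 2 * (/ y + / (P - y))) with (/ (P * y * (P - y))) by (field; repeat split; lra).
 apply Rinv_le_contravar. apply Rmult_lt_0_compat; [apply Rmult_lt_0_compat|]; lra.
 assert (0 < y * (P - y)) by (apply Rmult_lt_0_compat; lra). nra. Qed.

Lemma tt_sum_bound i : sumN (tt (S (2 * i))) (2 * i) <= 2 * Hn (S (2 * i)) / X i ^ 2.
Proof. 
 set (c := fun k => / INR (S k)).
 apply Rle_trans with (sumN (fun k => / X i ^ 2 * (c k + c (2 * i - S k)%nat)) (2 * i)).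
 - apply sumN_le. intros k Hk. rewrite tt_eq. replace (Nat.eqb k (2 * i)) with false by (symmetry; apply Nat.eqb_neq; lia).
   unfold c. replace (INR (S (2 * i - S k))) with (X i - Y k).
   apply ineq_term. apply Y_pos. rewrite <- XS. apply lt_INR. lia.
   rewrite <- XS. unfold Y. rewrite !S_INR. rewrite minus_INR by lia. rewrite ?S_INR. ring.
 - rewrite sumN_scal, sumN_plus, <- sumN_rev.
   assert (Hn (S (2 * i)) = sumN c (2 * i) + c (2 * i)%nat) by reflexivity.
   assert (0 < c (2 * i)%nat) by (apply Rinv_0_lt_compat, INR_S_pos).
   assert (0 < / X i ^ 2) by (apply Rinv_0_lt_compat, pow_lt, X_pos).
   unfold Rdiv. rewrite H. nra. Qed.

Lemma abs_tt_series i : is_series (fun k => Rabs (tt (S (2 * i)) k))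
  (- ((Hn (S (2 * i)) - 5 / (4 * X i)) / X i ^ 2) + 2 * sumN (tt (S (2 * i))) (2 * i)).
Proof. eapply isR_ext. intros k; symmetry; apply tt_abs.
 apply isR_plus.
 - apply (isR_eq _ (-1 * ((Hn (S (2 * i)) - 5 / (4 * INR (S (2 * i)))) / INR (S (2 * i)) ^ 2))). rewrite XS; ring.
   eapply isR_ext; [|apply (isR_scal (-1)), D2]. intros k; simpl; ring.
 - apply isR_scal, isR_finsupp. Qed.

Lemma abs_tt_bound i : - ((Hn (S (2 * i)) - 5 / (4 * X i)) / X i ^ 2) + 2 * sumN (tt (S (2 * i))) (2 * i)
  <= 5 / 4 * / X i ^ 3 + 4 * (Hn (S (2 * i)) / X i ^ 2).
Proof. assert (H1 := tt_sum_bound i). assert (H2 := Hn_nonneg (S (2 * i))). assert (Hx := X_pos i).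
 replace (- ((Hn (S (2 * i)) - 5 / (4 * X i)) / X i ^ 2)) with (5 / 4 * / X i ^ 3 - Hn (S (2 * i)) / X i ^ 2) by (field; lra).
 assert (0 <= Hn (S (2 * i)) / X i ^ 2) by (apply Rmult_le_pos; [lra| apply Rlt_le, Rinv_0_lt_compat, pow_lt; lra]).
 unfold Rdiv in *. lra. Qed.

Lemma exR_scal c (a : nat -> R) : ex_series a -> ex_series (fun n => c * a n).
Proof. intros [l H]. exists (c * l). apply isR_scal; auto. Qed.
Lemma exR_plus (a b : nat -> R) : ex_series a -> ex_series b -> ex_series (fun n => a n + b n).
Proof. intros [l H] [l' H']. exists (l + l'). apply isR_plus; auto. Qed.

Definition bnd (i : nat) : R := 5 / 4 * / X i ^ 3 + 4 * (Hn (S (2 * i)) / X i ^ 2).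

Lemma ex_bnd : ex_series bnd.
Proof. unfold bnd. apply exR_plus.
 - apply (exR_scal (5/4) (fun i => / X i ^ 3)). apply ex_lambda_terms. lia.
 - apply (exR_scal 4). eapply ex_series_ext; [|apply ex_HS]. intros i.
   unfold X. replace (2 * i + 1)%nat with (S (2 * i)) by lia. reflexivity. Qed.

Lemma g1_row m i : ex_series (fun k => Rabs (g1 m i k)) /\ Series (fun k => Rabs (g1 m i k)) <= bnd i.
Proof. assert (Ht := abs_tt_series i). 
 assert (He : ex_series (fun k => Rabs (g1 m i k))).
 { apply ex_series_le_R with (b := fun k => Rabs (tt (S (2 * i)) k)). intros k. rewrite Rabs_Rabsolu. apply g1_abs.
   eexists; eauto. }
 split; auto. eapply Rle_trans; [|apply abs_tt_bound]. rewrite <- (is_series_unique _ _ Ht).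
 apply Series_le. intros k; split. apply Rabs_pos. apply g1_abs. eexists; eauto. Qed.

Lemma g1_col_even m j : Series (fun i => g1 m i (2 * j)%nat) = / 4 * / X j ^ (2 * m + 3).
Proof. apply is_series_unique. unfold g1. 
 eapply isR_eq; [|apply isR_scal, D3even]. rewrite X_Y. unfold X.
 replace (2 * m + 3)%nat with ((2 * m + 1) + 2)%nat by lia. rewrite !pow_add. assert (0 < INR (2 * j + 1)) by (apply lt_0_INR; lia). field. repeat split; try (apply pow_nonzero); lra. Qed.

Lemma g1_col_odd m j : Series (fun i => g1 m i (2 * j + 1)%nat) = 0.
Proof. apply is_series_unique. unfold g1. 
 eapply isR_eq; [|apply isR_scal, D3odd]. ring. Qed.

Lemma g1_total m : is_series (fun i => Series (g1 m i)) (lambda (2 * m + 3) / 4).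
Proof.
 assert (Hrow := g1_row m).
 assert (Hf := fubini (g1 m) (fun i => proj1 (Hrow i))).
 assert (Hb : ex_series (fun i => Series (fun k => Rabs (g1 m i k)))).
 { apply ex_series_le_R with (b := bnd); [|apply ex_bnd]. intros i.
   rewrite Rabs_pos_eq. apply (proj2 (Hrow i)).
   eapply Rle_trans; [|apply (sumN_le_Series _ (fun k => Rabs_pos _) (proj1 (Hrow i)) 0)]. simpl; lra. }
 specialize (Hf Hb).
 assert (Hcol : is_series (fun k => Series (fun i => g1 m i k)) (lambda (2 * m + 3) / 4)).
 { apply isR_even. intros j; apply g1_col_odd.
   eapply isR_ext. intros j; symmetry; apply g1_col_even.
   eapply isR_eq; [|apply isR_scal, is_lambda; lia]. unfold Rdiv; ring. }
 assert (E := is_series_unique _ _ Hf). rewrite (is_series_unique _ _ Hcol) in E.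
 rewrite E. apply Series_correct.
 apply ex_series_le_R with (b := bnd); [|apply ex_bnd]. intros i.
 eapply Rle_trans. apply Series_Rabs. apply (proj1 (Hrow i)). apply (proj2 (Hrow i)). Qed.

Lemma HFi m i : is_series (FF m i) (sumN (fun t => / X i ^ (2 * t + 2) * zeta (2 * m + 1 - 2 * t)) m).
Proof. unfold FF, GF.
 apply (isR_sumN (fun t k => / X i ^ (2 * t + 2) * / Y k ^ (2 * m + 1 - 2 * t))).
 intros t Ht. apply isR_scal. apply is_zeta. lia. Qed.

Lemma HDi m i : is_series (DD m i) (INR m / X i ^ (2 * m + 3)).
Proof. unfold DD. apply isR_spike. Qed.

Lemma Hg2i m i : is_series (g2 m i) (/ X i ^ (2 * m) * ((Hn (S (2 * i)) - 5 / (4 * X i)) / X i ^ 2)).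
Proof. unfold g2. rewrite <- XS. apply isR_scal. apply D2. Qed.

Theorem mainTheorem15 (a : nat) (ha : (1 <= a)%nat) :
  is_series (fun n : nat => harmonic (2 * n + 1) / (INR (2 * n + 1)) ^ (2 * a))
    ((INR (2 * a + 1)) / 2 * lambda (2 * a + 1)
     - sum_1_to (a - 1) (fun j => zeta (2 * a + 1 - 2 * j) * lambda (2 * j))).
Proof.
 destruct a as [|m]; [lia|].
 assert (Hg1 := g1_total m).
 assert (HZ : is_series (fun i => Series (FF m i)) (sumN (fun t => zeta (2 * m + 1 - 2 * t) * lambda (2 * t + 2)) m)).
 { eapply isR_ext. intros i; symmetry; apply is_series_unique, HFi.
   apply (isR_sumN (fun t i => / X i ^ (2 * t + 2) * zeta (2 * m + 1 - 2 * t))).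
   intros t Ht. eapply isR_ext; [|apply (isR_scal (zeta (2 * m + 1 - 2 * t))), is_lambda; lia].
   intros i; unfold X; apply Rmult_comm. }
 assert (HD : is_series (fun i => Series (DD m i)) (INR m * lambda (2 * m + 3))).
 { eapply isR_ext. intros i; symmetry; apply is_series_unique, HDi.
   eapply isR_ext; [|apply isR_scal, is_lambda; lia]. intros i; unfold X, Rdiv; reflexivity. }
 assert (HL : is_series (fun i => 5 / 4 * / X i ^ (2 * m + 3)) (5 / 4 * lambda (2 * m + 3))).
 { apply isR_scal, is_lambda; lia. }
 assert (Hpt : forall i, harmonic (2 * i + 1) / INR (2 * i + 1) ^ (2 * S m) =
    Series (g1 m i) - Series (FF m i) + Series (DD m i) + 5 / 4 * / X i ^ (2 * m + 3)).
 { intros i.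
   assert (E1 : Series (FF m i) = Series (DD m i) + Series (g1 m i) - Series (g2 m i)).
   { rewrite (Series_ext _ _ (FF_decomp m i)).
     assert (e1 : ex_series (DD m i)) by (eexists; apply HDi).
     assert (e2 : ex_series (g1 m i)) by (apply ex_series_Rabs, (proj1 (g1_row m i))).
     assert (e3 : ex_series (g2 m i)) by (eexists; apply Hg2i).
     rewrite Series_minus, Series_plus; auto. apply exR_plus; auto. }
   assert (E2 := is_series_unique _ _ (Hg2i m i)).
   assert (E3 : Series (g1 m i) - Series (FF m i) + Series (DD m i) = Series (g2 m i)) by lra.
   rewrite E3, E2, harmonic_Hn.
   replace (2 * i + 1)%nat with (S (2 * i)) by lia. rewrite XS.
   replace (2 * S m)%nat with (2 * m + 2)%nat by lia.
   replace (2 * m + 3)%nat with (2 * m + 2 + 1)%nat by lia.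
   assert (Hx := X_pos i). rewrite !pow_add.
   assert (X i ^ (2 * m) <> 0) by (apply pow_nonzero; lra).
   field. repeat split; lra. }
 eapply isR_ext. intros i; symmetry; apply Hpt.
 eapply isR_eq; [|apply isR_plus; [apply isR_plus; [apply isR_minus; [exact Hg1|exact HZ]|exact HD]|exact HL]].
 unfold sum_1_to. rewrite fold_sumN. replace (S m - 1)%nat with m by lia.
 rewrite (sumN_ext (fun k => zeta (2 * S m + 1 - 2 * (1 + k)) * lambda (2 * (1 + k))) (fun t => zeta (2 * m + 1 - 2 * t) * lambda (2 * t + 2))).
 2: { intros k Hk. f_equal; f_equal; lia. }
 replace (2 * S m + 1)%nat with (2 * m + 3)%nat by lia.
 replace (INR (2 * m + 3)) with (2 * INR m + 3) by (rewrite plus_INR, mult_INR; simpl; ring).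
 field. Qed.
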